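(* For each $X\subseteq\omega$, the equivalence relation $E^X_=$ on $\omega$ defined by $i\,E^X_=\,j\iff W_i^X=W_j^X$ is complete among all $\Pi^X_2$ equivalence relations on $\omega$ with respect to finitary reducibility; that is, for every equivalence relation $R$ on $\omega$ which is $\Pi^0_2$ relative to $X$, there is a (computable, not merely $X$-computable) finitary reduction from $R$ to $E^X_=$.
   Context: $W_e^X$ denotes the domain of the $e$-th oracle Turing machine with oracle $X$. For equivalence relations $E,F$ on $\omega$, a finitary reduction from $E$ to $F$ is a single total computable function which, given $n\ge1$ and an $n$-tuple $(x_0,\dots,x_{n-1})\in\omega^n$, outputs an $n$-tuple $(y_0,\dots,y_{n-1})\in\omega^n$ such that for all $i<j<n$, $x_i\,E\,x_j\iff y_i\,F\,y_j$; its existence is written $E\leq_c^{<\omega}F$. *)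

(* Defs.v *)
From Stdlib Require Import Arith List Cantor.
Import ListNotations.

Definition pair (x y : nat) : nat := Cantor.to_nat (x, y).
Definition unpair (n : nat) : nat * nat := Cantor.of_nat n.

Inductive code : Type :=
| cZero
| cSucc
| cId
| cFst
| cSnd
| cOracle
| cComp (f g : code)
| cPair (f g : code)
| cRec (f g : code)          (* <a,0> |-> f a ; <a,n+1> |-> g <a,<n,h(a,n)>> *)
| cMu (f : code).            (* x |-> least i with f <x,i> = 0 (all earlier defined) *)

Fixpoint eval (X : nat -> bool) (k : nat) (c : code) (x : nat) {struct k}
  : option nat :=
  match k with
  | 0 => None
  | S k =>
    match c with
    | cZero => Some 0
    | cSucc => Some (S x)
    | cId => Some x
    | cFst => Some (fst (unpair x))
    | cSnd => Some (snd (unpair x))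
    | cOracle => Some (if X x then 1 else 0)
    | cComp f g =>
        match eval X k g x with Some y => eval X k f y | None => None end
    | cPair f g =>
        match eval X k f x, eval X k g x with
        | Some a, Some b => Some (pair a b)
        | _, _ => None
        end
    | cRec f g =>
        let a := fst (unpair x) in
        (fix r (n : nat) : option nat :=
           match n with
           | 0 => eval X k f a
           | S m => match r m with
                    | Some h => eval X k g (pair a (pair m h))
                    | None => None
                    end
           end) (snd (unpair x))
    | cMu f =>
        (fix s (t i : nat) : option nat :=
           match t with
           | 0 => None
           | S t => match eval X k f (pair x i) with
                    | Some 0 => Some i
                    | Some _ => s t (S i)
                    | None => None
                    end
           end) k 0
    end
  end.

Definition computes (X : nat -> bool) (c : code) (x y : nat) : Prop :=
  exists k, eval X k c x = Some y.

Definition halts (X : nat -> bool) (c : code) (x : nat) : Prop :=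
  exists y, computes X c x y.

(* Goedel numbering: index e = <tag, rest>. Every program has an index. *)
Fixpoint decode_aux (k e : nat) : code :=
  match k with
  | 0 => cZero
  | S k =>
    let t := fst (unpair e) in
    let r := snd (unpair e) in
    let a := fst (unpair r) in
    let b := snd (unpair r) in
    match t with
    | 0 => cZero
    | 1 => cSucc
    | 2 => cId
    | 3 => cFst
    | 4 => cSnd
    | 5 => cOracle
    | 6 => cComp (decode_aux k a) (decode_aux k b)
    | 7 => cPair (decode_aux k a) (decode_aux k b)
    | 8 => cRec (decode_aux k a) (decode_aux k b)
    | _ => cMu (decode_aux k r)
    end
  end.

Definition decode (e : nat) : code := decode_aux e e.

Definition phi (X : nat -> bool) (e x y : nat) : Prop := computes X (decode e) x y.

Definition W (X : nat -> bool) (e n : nat) : Prop := halts X (decode e) n.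

Definition EW (X : nat -> bool) (i j : nat) : Prop := forall n, W X i n <-> W X j n.

(* The empty oracle: "computable" means computable with this oracle. *)
Definition no_oracle : nat -> bool := fun _ => false.

Definition is_equiv (R : nat -> nat -> Prop) : Prop :=
  (forall x, R x x) /\ (forall x y, R x y -> R y x) /\
  (forall x y z, R x y -> R y z -> R x z).

(* R is Pi^0_2 relative to X: R i j <-> forall a, exists b, T(i,j,a,b),
   with T decided by a total X-computable function (0 = true). *)
Definition Pi02_rel (X : nat -> bool) (R : nat -> nat -> Prop) : Prop :=
  exists e,
    (forall z, exists y, phi X e z y) /\
    (forall i j, R i j <-> forall a, exists b, phi X e (pair (pair i j) (pair a b)) 0).

Fixpoint lcode (xs : list nat) : nat :=
  match xs with
  | [] => 0
  | x :: s => S (pair x (lcode s))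
  end.

Definition finitary_reduction (E F : nat -> nat -> Prop)
    (f : list nat -> list nat) : Prop :=
  (exists e, forall xs, phi no_oracle e (lcode xs) (lcode (f xs))) /\
  (forall xs, 1 <= length xs ->
     length (f xs) = length xs /\
     forall i j, i < j < length xs ->
       (E (nth i xs 0) (nth j xs 0) <-> F (nth i (f xs) 0) (nth j (f xs) 0))).

Definition finitary_reducible (E F : nat -> nat -> Prop) : Prop :=
  exists f, finitary_reduction E F f.

(* Main.v *)
Require Import Defs.
From Stdlib Require Import Arith List Cantor Lia Classical ClassicalEpsilon Setoid.
Import ListNotations.

Definition fs (z : nat) := fst (unpair z).
Definition sn (z : nat) := snd (unpair z).

Lemma fs_pair a b : fs (pair a b) = a.
Proof. unfold fs, pair, unpair. rewrite cancel_of_to. reflexivity. Qed.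
Lemma sn_pair a b : sn (pair a b) = b.
Proof. unfold sn, pair, unpair. rewrite cancel_of_to. reflexivity. Qed.
Lemma pair_eta z : pair (fs z) (sn z) = z.
Proof. unfold fs, sn, pair, unpair. rewrite <- surjective_pairing. apply cancel_to_of. Qed.
Lemma pair_ge a b : a + b <= pair a b.
Proof. unfold pair. pose proof (to_nat_non_decreasing a b). lia. Qed.
Lemma pair_00 : pair 0 0 = 0.
Proof. reflexivity. Qed.
Lemma unpair_0 : unpair 0 = (0,0).
Proof. reflexivity. Qed.
Lemma fs_0 : fs 0 = 0. Proof. reflexivity. Qed.
Lemma sn_0 : sn 0 = 0. Proof. reflexivity. Qed.

Global Opaque pair unpair.

Definition muloop (ev : nat -> option nat) (x : nat) : nat -> nat -> option nat :=
  fix s (t i : nat) : option nat :=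
  match t with
  | 0 => None
  | S t => match ev (pair x i) with
           | Some 0 => Some i
           | Some _ => s t (S i)
           | None => None
           end
  end.

Definition recloop (ef eg : nat -> option nat) (a : nat) : nat -> option nat :=
  fix r (n : nat) : option nat :=
  match n with
  | 0 => ef a
  | S m => match r m with
           | Some h => eg (pair a (pair m h))
           | None => None
           end
  end.

Lemma eval_mu X k f x : eval X (S k) (cMu f) x = muloop (eval X k f) x k 0.
Proof. reflexivity. Qed.
Lemma eval_rec X k f g x : eval X (S k) (cRec f g) x =
  recloop (eval X k f) (eval X k g) (fs x) (sn x).
Proof. reflexivity. Qed.

Definition sub_ev (e1 e2 : nat -> option nat) := forall z y, e1 z = Some y -> e2 z = Some y.

Lemma muloop_mono e1 e2 x t t' i r : sub_ev e1 e2 -> t <= t' ->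
  muloop e1 x t i = Some r -> muloop e2 x t' i = Some r.
Proof.
  intros H; revert t' i; induction t; intros t' i Ht E; simpl in E; [discriminate|].
  destruct t' as [|t']; [lia|]. simpl.
  destruct (e1 (pair x i)) as [[|v]|] eqn:E1; try discriminate.
  - rewrite (H _ _ E1). exact E.
  - rewrite (H _ _ E1). apply IHt; [lia|exact E].
Qed.

Lemma recloop_mono f1 f2 g1 g2 a n r : sub_ev f1 f2 -> sub_ev g1 g2 ->
  recloop f1 g1 a n = Some r -> recloop f2 g2 a n = Some r.
Proof.
  intros Hf Hg; revert r; induction n; intros r E; simpl in *; auto.
  destruct (recloop f1 g1 a n) eqn:E1; try discriminate.
  rewrite (IHn _ eq_refl). auto.
Qed.

Lemma eval_mono X k : forall c x y k', k <= k' -> eval X k c x = Some y -> eval X k' c x = Some y.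
Proof.
  induction k; intros c x y k' Hk E; [discriminate|].
  destruct k' as [|k']; [lia|].
  assert (IH : forall c, sub_ev (eval X k c) (eval X k' c)).
  { intros c' z w; apply IHk; lia. }
  destruct c; simpl in E |- *; auto.
  - destruct (eval X k c2 x) eqn:E2; try discriminate.
    rewrite (IH _ _ _ E2). apply IH; auto.
  - destruct (eval X k c1 x) eqn:E1; try discriminate.
    destruct (eval X k c2 x) eqn:E2; try discriminate.
    rewrite (IH _ _ _ E1), (IH _ _ _ E2). auto.
  - change (recloop (eval X k c1) (eval X k c2) (fs x) (sn x) = Some y) in E.
    change (recloop (eval X k' c1) (eval X k' c2) (fs x) (sn x) = Some y).
    eapply recloop_mono; eauto.
  - change (muloop (eval X k c) x k 0 = Some y) in E.
    change (muloop (eval X k' c) x k' 0 = Some y).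
    eapply muloop_mono; [exact (IH c)| |exact E]; lia.
Qed.

Lemma computes_det X c x y y' : computes X c x y -> computes X c x y' -> y = y'.
Proof.
  intros [k1 E1] [k2 E2].
  apply (eval_mono X k1 c x y (k1+k2)) in E1; [|lia].
  apply (eval_mono X k2 c x y' (k1+k2)) in E2; [|lia].
  congruence.
Qed.

Definition tot X c (F : nat -> nat) := forall x, computes X c x (F x).

Ltac fuel2 k1 k2 E1 E2 :=
  let H1 := fresh in let H2 := fresh in
  pose proof (eval_mono _ k1 _ _ _ (k1+k2) ltac:(lia) E1) as H1;
  pose proof (eval_mono _ k2 _ _ _ (k1+k2) ltac:(lia) E2) as H2.

Lemma tot_zero X : tot X cZero (fun _ => 0).
Proof. intro x; exists 1; reflexivity. Qed.
Lemma tot_succ X : tot X cSucc S.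
Proof. intro x; exists 1; reflexivity. Qed.
Lemma tot_id X : tot X cId (fun x => x).
Proof. intro x; exists 1; reflexivity. Qed.
Lemma tot_fst X : tot X cFst fs.
Proof. intro x; exists 1; reflexivity. Qed.
Lemma tot_snd X : tot X cSnd sn.
Proof. intro x; exists 1; reflexivity. Qed.

Lemma tot_comp X f g F G : tot X f F -> tot X g G -> tot X (cComp f g) (fun x => F (G x)).
Proof.
  intros Hf Hg x. destruct (Hg x) as [k1 E1]. destruct (Hf (G x)) as [k2 E2].
  fuel2 k1 k2 E1 E2. exists (S (k1+k2)). simpl. rewrite H. exact H0.
Qed.

Lemma tot_pair X f g F G : tot X f F -> tot X g G -> tot X (cPair f g) (fun x => pair (F x) (G x)).
Proof.
  intros Hf Hg x. destruct (Hf x) as [k1 E1]. destruct (Hg x) as [k2 E2].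
  fuel2 k1 k2 E1 E2. exists (S (k1+k2)). simpl. rewrite H, H0. reflexivity.
Qed.

Fixpoint recspec (F G : nat -> nat) (a n : nat) : nat :=
  match n with
  | 0 => F a
  | S m => G (pair a (pair m (recspec F G a m)))
  end.

Lemma tot_rec X f g F G : tot X f F -> tot X g G ->
  tot X (cRec f g) (fun x => recspec F G (fs x) (sn x)).
Proof.
  intros Hf Hg x.
  assert (forall n, exists k, recloop (eval X k f) (eval X k g) (fs x) n = Some (recspec F G (fs x) n)).
  { induction n; simpl.
    - apply Hf.
    - destruct IHn as [k1 E1]. destruct (Hg (pair (fs x) (pair n (recspec F G (fs x) n)))) as [k2 E2].
      exists (k1+k2).
      erewrite (recloop_mono _ _ _ _ _ _ _ _ _ E1).
      + eapply eval_mono; [|exact E2]; lia.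
      Unshelve. all: intros z w; apply eval_mono; lia. }
  destruct (H (sn x)) as [k E]. exists (S k). rewrite eval_rec. exact E.
Qed.

Lemma halts_comp X f g G x : tot X g G -> (halts X (cComp f g) x <-> halts X f (G x)).
Proof.
  intro Hg; split.
  - intros [y [k E]]. destruct k; [discriminate|]. simpl in E.
    destruct (eval X k g x) eqn:E1; try discriminate.
    assert (n = G x) by (apply (computes_det X g x); [exists k; auto | apply Hg]).
    subst. exists y, k. exact E.
  - intros [y [k2 E2]]. destruct (Hg x) as [k1 E1]. fuel2 k1 k2 E1 E2.
    exists y, (S (k1+k2)). simpl. rewrite H. exact H0.
Qed.

Lemma muloop_sound e x t i r : muloop e x t i = Some r -> e (pair x r) = Some 0.
Proof.
  revert i; induction t; intros i E; simpl in E; [discriminate|].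
  destruct (e (pair x i)) as [[|v]|] eqn:E1; try discriminate.
  - inversion E; subst; auto.
  - eauto.
Qed.

Lemma muloop_complete X k f F x t i i0 :
  (forall j, j <= i0 -> eval X k f (pair x j) = Some (F (pair x j))) ->
  i <= i0 -> i0 < i + t -> F (pair x i0) = 0 ->
  exists r, muloop (eval X k f) x t i = Some r.
Proof.
  intros Hk. revert i; induction t; intros i H1 H2 H3; [lia|].
  simpl. rewrite (Hk i H1).
  destruct (F (pair x i)) eqn:Ei; [eauto|].
  assert (i <> i0) by (intro; subst; congruence).
  apply IHt; lia.
Qed.

Lemma halts_mu X f F x : tot X f F -> (halts X (cMu f) x <-> exists i, F (pair x i) = 0).
Proof.
  intro Hf; split.
  - intros [y [k E]]. destruct k; [discriminate|]. rewrite eval_mu in E.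
    apply muloop_sound in E. exists y.
    apply (computes_det X f (pair x y)); [apply Hf|exists k; auto].
  - intros [i0 Hi0].
    assert (forall n, exists k, forall j, j <= n -> eval X k f (pair x j) = Some (F (pair x j))).
    { induction n.
      - destruct (Hf (pair x 0)) as [k E]. exists k. intros j Hj. replace j with 0 by lia. auto.
      - destruct IHn as [k1 E1]. destruct (Hf (pair x (S n))) as [k2 E2]. exists (k1+k2).
        intros j Hj. destruct (Nat.eq_dec j (S n)).
        + subst. eapply eval_mono; [|exact E2]; lia.
        + eapply eval_mono; [|apply E1; lia]; lia. }
    destruct (H i0) as [k Hk].
    destruct (muloop_complete X (k + S i0) f F x (k + S i0) 0 i0) as [r Er]; auto; try lia.
    { intros j Hj. eapply eval_mono; [|apply Hk; auto]; lia. }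
    exists r, (S (k + S i0)). rewrite eval_mu. exact Er.
Qed.

Lemma unp a b : unpair (pair a b) = (a, b).
Proof. Transparent pair unpair. unfold pair, unpair. apply cancel_of_to. Opaque pair unpair. Qed.

Fixpoint enc (c : code) : nat :=
  match c with
  | cZero => pair 0 0
  | cSucc => pair 1 0
  | cId => pair 2 0
  | cFst => pair 3 0
  | cSnd => pair 4 0
  | cOracle => pair 5 0
  | cComp f g => pair 6 (pair (enc f) (enc g))
  | cPair f g => pair 7 (pair (enc f) (enc g))
  | cRec f g => pair 8 (pair (enc f) (enc g))
  | cMu f => pair 9 (enc f)
  end.

Lemma decode_aux_enc c : forall k, enc c <= k -> decode_aux k (enc c) = c.
Proof.
  induction c; intros k Hk; destruct k as [|k]; try reflexivity; simpl in Hk |- *;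
  try (pose proof (pair_ge 1 0); pose proof (pair_ge 2 0); pose proof (pair_ge 3 0);
       pose proof (pair_ge 4 0); pose proof (pair_ge 5 0); lia);
  rewrite ?unp; simpl; rewrite ?unp; simpl; try reflexivity.
  all: try (pose proof (pair_ge 6 (pair (enc c1) (enc c2)));
       pose proof (pair_ge 7 (pair (enc c1) (enc c2)));
       pose proof (pair_ge 8 (pair (enc c1) (enc c2)));
       pose proof (pair_ge (enc c1) (enc c2));
       rewrite IHc1, IHc2 by lia; reflexivity).
  all: try (match goal with H: pair ?a ?b <= _ |- _ => pose proof (pair_ge a b) end; lia).
  pose proof (pair_ge 9 (enc c)). rewrite IHc by lia. reflexivity.
Qed.

Lemma decode_enc c : decode (enc c) = c.
Proof. apply decode_aux_enc. lia. Qed.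

Fixpoint const (n : nat) : code :=
  match n with 0 => cZero | S n => cComp cSucc (const n) end.

Lemma tot_ext X c F G : tot X c F -> (forall x, F x = G x) -> tot X c G.
Proof. intros H E x. rewrite <- E. apply H. Qed.

Lemma tot_const X n : tot X (const n) (fun _ => n).
Proof. induction n; simpl. apply tot_zero. exact (tot_comp X _ _ _ _ (tot_succ X) IHn). Qed.

Fixpoint ENC (c : code) : code :=
  match c with
  | cZero => cPair (const 0) (const 0)
  | cSucc => cPair (const 1) (const 0)
  | cId => cPair (const 2) (const 0)
  | cFst => cPair (const 3) (const 0)
  | cSnd => cPair (const 4) (const 0)
  | cOracle => cPair (const 5) (const 0)
  | cComp f g => cPair (const 6) (cPair (ENC f) (ENC g))
  | cPair f g => cPair (const 7) (cPair (ENC f) (ENC g))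
  | cRec f g => cPair (const 8) (cPair (ENC f) (ENC g))
  | cMu f => cPair (const 9) (ENC f)
  end.

Lemma tot_ENC X c : tot X (ENC c) (fun _ => enc c).
Proof.
  induction c; cbn [ENC enc];
  (eapply tot_ext; [repeat (eapply tot_pair || eapply tot_const || eassumption)| intro; reflexivity]).
Qed.

Hint Rewrite fs_pair sn_pair : pr.

Definition ITER (body : code) := cRec cId (cComp body (cComp cSnd cSnd)).

Lemma tot_ITER X body B : tot X body B -> tot X (ITER body) (fun x => Nat.iter (sn x) B (fs x)).
Proof.
  intro H. eapply tot_ext.
  - apply tot_rec. apply tot_id. apply tot_comp. exact H. apply tot_comp; [apply tot_snd|apply tot_snd].
  - intro x. cbv beta. generalize (sn x) as n. intro n. induction n as [|n IHn]; simpl; auto. autorewrite with pr. rewrite IHn. reflexivity.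
Qed.

Definition LOOP body sc nc := cComp (ITER body) (cPair sc nc).
Lemma tot_LOOP X body sc nc B S N : tot X body B -> tot X sc S -> tot X nc N ->
  tot X (LOOP body sc nc) (fun x => Nat.iter (N x) B (S x)).
Proof.
  intros H1 H2 H3. eapply tot_ext. apply tot_comp. apply tot_ITER, H1. apply tot_pair; eauto.
  intro x. simpl. autorewrite with pr. reflexivity.
Qed.

Definition PRED := cComp (cRec cZero (cComp cFst cSnd)) (cPair cZero cId).
Lemma tot_PRED X : tot X PRED pred.
Proof.
  eapply tot_ext. apply tot_comp. apply tot_rec. apply tot_zero. apply tot_comp. apply tot_fst. apply tot_snd.
  apply tot_pair. apply tot_zero. apply tot_id.
  intro x. simpl. autorewrite with pr. destruct x; simpl; autorewrite with pr; reflexivity.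
Qed.

Definition IFZ c t e := cComp (cRec t (cComp e cFst)) (cPair cId c).
Lemma tot_IFZ X c t e C T E : tot X c C -> tot X t T -> tot X e E ->
  tot X (IFZ c t e) (fun x => match C x with 0 => T x | S _ => E x end).
Proof.
  intros H1 H2 H3. eapply tot_ext. apply tot_comp. apply tot_rec. exact H2. apply tot_comp. exact H3. apply tot_fst.
  apply tot_pair. apply tot_id. exact H1.
  intro x. simpl. autorewrite with pr. destruct (C x); simpl; autorewrite with pr; reflexivity.
Qed.

Definition SUB a b := LOOP PRED a b.
Lemma tot_SUB X a b A B : tot X a A -> tot X b B -> tot X (SUB a b) (fun x => A x - B x).
Proof.
  intros H1 H2. eapply tot_ext. apply tot_LOOP. apply tot_PRED. exact H1. exact H2.
  intro x. cbv beta. generalize (A x) (B x). intros a0 n. induction n; simpl; [lia|]. rewrite IHn. lia.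
Qed.

Definition eqf (a b : nat) := match a - b with 0 => b - a | S _ => 1 end.
Lemma eqf_spec a b : eqf a b = 0 <-> a = b.
Proof. unfold eqf. destruct (a - b) eqn:E; lia. Qed.
Definition EQ a b := IFZ (SUB a b) (SUB b a) (const 1).
Lemma tot_EQ X a b A B : tot X a A -> tot X b B -> tot X (EQ a b) (fun x => eqf (A x) (B x)).
Proof.
  intros. eapply tot_ext. apply tot_IFZ; try apply tot_SUB; eauto. apply tot_const.
  intro; reflexivity.
Qed.

Definition andf u v := match u with 0 => v | S _ => 1 end.
Lemma andf_spec u v : andf u v = 0 <-> u = 0 /\ v = 0.
Proof. destruct u; simpl; lia. Qed.
Definition AND a b := IFZ a b (const 1).
Lemma tot_AND X a b A B : tot X a A -> tot X b B -> tot X (AND a b) (fun x => andf (A x) (B x)).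
Proof. intros. eapply tot_ext. apply tot_IFZ; eauto. apply tot_const. intro; reflexivity. Qed.

Definition notf u := match u with 0 => 1 | S _ => 0 end.
Definition NOT a := IFZ a (const 1) (const 0).
Lemma tot_NOT X a A : tot X a A -> tot X (NOT a) (fun x => notf (A x)).
Proof. intros. eapply tot_ext. apply tot_IFZ; eauto; apply tot_const. intro; reflexivity. Qed.

Definition TAIL := cComp cSnd PRED.
Definition HEAD := cComp cFst PRED.
Definition tl' r := sn (pred r).
Definition nthc (i l : nat) := fs (pred (Nat.iter i tl' l)).
Definition NTH ci cl := cComp HEAD (LOOP TAIL cl ci).
Lemma tot_NTH X ci cl I L : tot X ci I -> tot X cl L -> tot X (NTH ci cl) (fun x => nthc (I x) (L x)).
Proof.
  intros. eapply tot_ext. apply tot_comp. apply tot_comp. apply tot_fst. apply tot_PRED.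
  apply tot_LOOP; eauto. apply tot_comp. apply tot_snd. apply tot_PRED.
  intro; reflexivity.
Qed.

Lemma nthc_lcode xs : forall i, nthc i (lcode xs) = nth i xs 0.
Proof.
  unfold nthc. induction xs; intro i.
  - assert (H0 : forall j, Nat.iter j tl' 0 = 0).
    { induction j; simpl; [|rewrite IHj]; reflexivity. }
    simpl. rewrite H0. destruct i; reflexivity.
  - destruct i; simpl. autorewrite with pr. reflexivity.
    rewrite <- Nat.iter_succ, Nat.iter_succ_r. unfold tl' at 2. simpl. autorewrite with pr. apply IHxs.
Qed.

Definition stepf (T : nat -> nat) (s : nat) :=
  pair (fs s) (pair (S (fs (sn s))) (match sn (sn s) with 0 => T (pair (fs s) (fs (sn s))) | S _ => sn (sn s) end)).
Definition STEPF t := cPair cFst (cPair (cComp cSucc (cComp cFst cSnd))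
   (IFZ (cComp cSnd cSnd) (cComp t (cPair cFst (cComp cFst cSnd))) (cComp cSnd cSnd))).
Lemma tot_STEPF X t T : tot X t T -> tot X (STEPF t) (stepf T).
Proof.
  intro H. eapply tot_ext.
  repeat first [ apply tot_IFZ | apply tot_pair | apply tot_fst | apply tot_snd | apply tot_succ | exact H | apply tot_comp ].
  intro x. reflexivity.
Qed.

Definition FORALL t := cComp (cComp cSnd cSnd) (LOOP (STEPF t) (cPair cFst (cPair cZero cZero)) cSnd).
Definition forallf T z := sn (sn (Nat.iter (sn z) (stepf T) (pair (fs z) (pair 0 0)))).
Lemma tot_FORALL X t T : tot X t T -> tot X (FORALL t) (forallf T).
Proof.
  intro H. eapply tot_ext. apply tot_comp. apply tot_comp; [apply tot_snd|apply tot_snd].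
  apply tot_LOOP. apply tot_STEPF, H. apply tot_pair. apply tot_fst. apply tot_pair; apply tot_zero.
  apply tot_snd. intro; reflexivity.
Qed.

Lemma forall_iter T x m : exists acc, Nat.iter m (stepf T) (pair x (pair 0 0)) = pair x (pair m acc)
  /\ (acc = 0 <-> forall a, a < m -> T (pair x a) = 0).
Proof.
  induction m.
  - exists 0. split; [reflexivity|]. split; intros; [lia|reflexivity].
  - destruct IHm as [acc [E Hacc]]. simpl. rewrite E. unfold stepf. autorewrite with pr.
    destruct acc as [|acc].
    + eexists. split; [reflexivity|]. split.
      * intros H0 a Ha. destruct (Nat.eq_dec a m); [subst; auto|]. apply Hacc; auto; lia.
      * intros H0. apply H0. lia.
    + eexists. split; [reflexivity|]. split; [discriminate|].
      intros H0. exfalso. assert (S acc = 0) by (apply Hacc; intros; apply H0; lia). lia.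
Qed.

Lemma forallf_spec T x m : forallf T (pair x m) = 0 <-> forall a, a < m -> T (pair x a) = 0.
Proof.
  unfold forallf. autorewrite with pr. destruct (forall_iter T x m) as [acc [E H]].
  rewrite E. autorewrite with pr. exact H.
Qed.

Definition EXISTS t := NOT (FORALL (NOT t)).
Definition existsf T z := notf (forallf (fun y => notf (T y)) z).
Lemma tot_EXISTS X t T : tot X t T -> tot X (EXISTS t) (existsf T).
Proof. intro H. apply tot_NOT, tot_FORALL, tot_NOT, H. Qed.

Lemma existsf_spec T x m : existsf T (pair x m) = 0 <-> exists a, a < m /\ T (pair x a) = 0.
Proof.
  unfold existsf. pose proof (forallf_spec (fun y => notf (T y)) x m).
  destruct (forallf (fun y => notf (T y)) (pair x m)) eqn:E; simpl.
  - split; [discriminate|]. intros [a [Ha Ta]]. assert (notf (T (pair x a)) = 0) by (apply H; auto).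
    rewrite Ta in H0. discriminate.
  - split; [|reflexivity]. intros _. apply NNPP. intro Hn. assert (S n = 0); [|discriminate].
    apply H. intros a Ha. destruct (T (pair x a)) eqn:Ta; [|reflexivity]. exfalso; eauto.
Qed.

Definition pK I := fs (fs (fs I)).
Definition pL I := sn (fs (fs I)).
Definition pJ I := fs (sn (fs I)).
Definition pM I := sn (sn (fs I)).
Definition pB I := fs (sn I).
Definition pR I := fs (sn (sn I)).
Definition pL' I := sn (sn (sn I)).
Definition vsf I := S (pair (pK I) (pL' I)).

Definition cK := cComp cFst (cComp cFst cFst).
Definition cL := cComp cSnd (cComp cFst cFst).
Definition cJ := cComp cFst (cComp cSnd cFst).
Definition cM := cComp cSnd (cComp cSnd cFst).
Definition cB := cComp cFst cSnd.
Definition cR := cComp cFst (cComp cSnd cSnd).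
Definition cL' := cComp cSnd (cComp cSnd cSnd).
Definition cVS := cComp cSucc (cPair cK cL').

Ltac solve_tot H := eapply tot_ext; [
  repeat first [ exact H | apply tot_EQ | apply tot_EXISTS | apply tot_FORALL | apply tot_AND | apply tot_NTH
   | apply tot_IFZ | apply tot_pair | apply tot_fst | apply tot_snd | apply tot_succ | apply tot_id
   | apply tot_zero | apply tot_comp ] | intro; reflexivity ].

Section Main.
Variable (X : nat -> bool) (t0 : code) (TF : nat -> nat) (Ht : tot X t0 TF).

(* y3 = pair (pair (pair I i) a) b *)
Definition T3f y3 :=
  let I := fs (fs (fs y3)) in let i := sn (fs (fs y3)) in
  TF (pair (pair (nthc (nthc i (vsf I)) (pL I)) (nthc (nthc (S i) (vsf I)) (pL I)))
           (pair (sn (fs y3)) (sn y3))).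
Definition cI3 := cComp cFst (cComp cFst cFst).
Definition ci3 := cComp cSnd (cComp cFst cFst).
Definition T3 := cComp t0 (cPair
   (cPair (NTH (NTH ci3 (cComp cVS cI3)) (cComp cL cI3))
          (NTH (NTH (cComp cSucc ci3) (cComp cVS cI3)) (cComp cL cI3)))
   (cPair (cComp cSnd cFst) cSnd)).
Lemma tot_T3 : tot X T3 T3f.
Proof. solve_tot Ht. Qed.

Definition T2f y2 := existsf T3f (pair y2 (pB (fs (fs y2)))).
Definition T2 := cComp (EXISTS T3) (cPair cId (cComp cB (cComp cFst cFst))).
Lemma tot_T2 : tot X T2 T2f.
Proof. pose proof tot_T3. solve_tot H. Qed.

Definition T1f y1 := forallf T2f (pair y1 (pM (fs y1))).
Definition T1 := cComp (FORALL T2) (cPair cId (cComp cM cFst)).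
Lemma tot_T1 : tot X T1 T1f.
Proof. pose proof tot_T2. solve_tot H. Qed.

Definition checkf I := andf (eqf (nthc (pR I) (vsf I)) (pJ I)) (forallf T1f (pair I (pR I))).
Definition CHECK := AND (EQ (NTH cR cVS) cJ) (cComp (FORALL T1) (cPair cId cR)).
Lemma tot_CHECK : tot X CHECK checkf.
Proof. pose proof tot_T1. solve_tot H. Qed.

Lemma checkf_spec k L j m B r L' :
 checkf (pair (pair (pair k L) (pair j m)) (pair B (pair r L'))) = 0 <->
 nthc r (S (pair k L')) = j /\ forall i, i < r -> forall a, a < m -> exists b, b < B /\
   TF (pair (pair (nthc (nthc i (S (pair k L'))) L) (nthc (nthc (S i) (S (pair k L'))) L)) (pair a b)) = 0.
Proof.
  unfold checkf. rewrite andf_spec, eqf_spec. unfold pR, vsf, pK, pL', pJ. autorewrite with pr.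
  rewrite forallf_spec. apply and_iff_compat_l. split.
  - intros H i Hi a Ha. specialize (H i Hi). unfold T1f in H. autorewrite with pr in H.
    rewrite forallf_spec in H. unfold pM in H. autorewrite with pr in H. specialize (H a Ha).
    unfold T2f in H. autorewrite with pr in H. rewrite existsf_spec in H. unfold pB in H.
    autorewrite with pr in H. destruct H as [b [Hb H]]. exists b. split; auto.
    unfold T3f in H. autorewrite with pr in H. unfold vsf, pK, pL', pL in H. autorewrite with pr in H. exact H.
  - intros H i Hi. unfold T1f. autorewrite with pr. rewrite forallf_spec. unfold pM. autorewrite with pr.
    intros a Ha. destruct (H i Hi a Ha) as [b [Hb H']].
    unfold T2f. autorewrite with pr. rewrite existsf_spec. unfold pB. autorewrite with pr.
    exists b. split; auto. unfold T3f. autorewrite with pr. unfold vsf, pK, pL', pL. autorewrite with pr. exact H'.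
Qed.

Definition P0 := cMu CHECK.
Definition Pw w := cComp P0 (cPair (const w) cId).

Lemma halts_Pw k L j m : halts X (Pw (pair k L)) (pair j m) <->
  exists B r L', nthc r (S (pair k L')) = j /\ forall i, i < r -> forall a, a < m -> exists b, b < B /\
   TF (pair (pair (nthc (nthc i (S (pair k L'))) L) (nthc (nthc (S i) (S (pair k L'))) L)) (pair a b)) = 0.
Proof.
  unfold Pw. rewrite (halts_comp X P0 _ (fun x => pair (pair k L) x)).
  2:{ eapply tot_ext. apply tot_pair. apply tot_const. apply tot_id. intro; reflexivity. }
  unfold P0. rewrite (halts_mu X CHECK checkf) by apply tot_CHECK. split.
  - intros [W HW]. rewrite <- (pair_eta W), <- (pair_eta (sn W)) in HW.
    rewrite checkf_spec in HW. eauto.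
  - intros [B [r [L' H]]]. exists (pair B (pair r L')). rewrite checkf_spec. exact H.
Qed.

End Main.

Ltac solve_tot2 := eapply tot_ext; [
  repeat first [ apply tot_ENC | apply tot_const | apply tot_IFZ | apply tot_pair | apply tot_fst | apply tot_snd | apply tot_succ | apply tot_id
   | apply tot_zero | apply tot_PRED | apply tot_comp ] | intro; reflexivity ].

Section F.
Variable t0 : code.
Definition idx w := enc (Pw t0 w).

Definition encconst w := Nat.iter w (fun v => pair 6 (pair (enc cSucc) v)) 0.
Lemma encconst_ok w : encconst w = enc (const w).
Proof. induction w; simpl. reflexivity. rewrite IHw. reflexivity. Qed.

Definition STEPC := cPair (const 6) (cPair (ENC cSucc) cId).
Definition IDX := cPair (const 6) (cPair (ENC (P0 t0)) (cPair (const 7)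
   (cPair (LOOP STEPC cZero cId) (ENC cId)))).
Lemma tot_IDX X : tot X IDX idx.
Proof.
  eapply tot_ext. apply tot_pair. apply tot_const. apply tot_pair. apply tot_ENC. apply tot_pair. apply tot_const.
  apply tot_pair. apply tot_LOOP. 3: apply tot_id. 2: apply tot_zero.
  apply tot_pair. apply tot_const. apply tot_pair. apply tot_ENC. apply tot_id. apply tot_ENC.
  intro w. unfold idx, Pw. cbn [enc]. f_equal. f_equal. f_equal. f_equal. f_equal.
  rewrite <- encconst_ok. reflexivity.
Qed.

Definition stepAf s := match fs (sn s) with 0 => s | S _ =>
  pair (fs s) (pair (sn (pred (fs (sn s)))) (pair (S (fs (sn (sn s))))
     (S (pair (idx (pair (fs (sn (sn s))) (fs s))) (sn (sn (sn s))))))) end.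
Definition STEPA := IFZ (cComp cFst cSnd) cId (cPair cFst (cPair (cComp cSnd (cComp PRED (cComp cFst cSnd)))
  (cPair (cComp cSucc (cComp cFst (cComp cSnd cSnd)))
   (cComp cSucc (cPair (cComp IDX (cPair (cComp cFst (cComp cSnd cSnd)) cFst)) (cComp cSnd (cComp cSnd cSnd))))))).
Lemma tot_STEPA X : tot X STEPA stepAf.
Proof. pose proof (tot_IDX X). eapply tot_ext; [
  repeat first [ exact H | apply tot_IFZ | apply tot_pair | apply tot_fst | apply tot_snd | apply tot_succ | apply tot_id
   | apply tot_PRED | apply tot_comp ] | intro; reflexivity ]. Qed.

Definition stepBf s := match fs s with 0 => s | S _ =>
  pair (sn (pred (fs s))) (S (pair (fs (pred (fs s))) (sn s))) end.
Definition STEPB := IFZ cFst cId (cPair (cComp cSnd (cComp PRED cFst)) (cComp cSucc (cPair (cComp cFst (cComp PRED cFst)) cSnd))).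
Lemma tot_STEPB X : tot X STEPB stepBf.
Proof. solve_tot2. Qed.

Definition Ff L :=
  let a := sn (sn (sn (Nat.iter L stepAf (pair L (pair L (pair 0 0)))))) in
  sn (Nat.iter a stepBf (pair a 0)).
Definition FPROG := cComp cSnd (LOOP STEPB (cPair cId cZero) cId) .
Definition FPROG' := cComp FPROG (cComp (cComp cSnd (cComp cSnd cSnd))
    (LOOP STEPA (cPair cId (cPair cId (cPair cZero cZero))) cId)).
Lemma tot_FPROG X : tot X FPROG' Ff.
Proof.
  pose proof (tot_STEPA X). pose proof (tot_STEPB X).
  eapply tot_ext. apply tot_comp. apply tot_comp. apply tot_snd. apply tot_LOOP. exact H0.
  apply tot_pair. apply tot_id. apply tot_zero. apply tot_id.
  apply tot_comp. apply tot_comp. apply tot_snd. apply tot_comp; apply tot_snd.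
  apply tot_LOOP. exact H. apply tot_pair. apply tot_id. apply tot_pair. apply tot_id. apply tot_pair; apply tot_zero.
  apply tot_id. intro; reflexivity.
Qed.

Lemma lcode_ge l : length l <= lcode l.
Proof. induction l; simpl; auto. pose proof (pair_ge a (lcode l)). lia. Qed.

Lemma iter_fix (g : nat -> nat) s n : g s = s -> Nat.iter n g s = s.
Proof. intro H; induction n; simpl; congruence. Qed.

Lemma loopA L s : forall k acc, Nat.iter (length s) stepAf (pair L (pair (lcode s) (pair k (lcode acc)))) =
  pair L (pair 0 (pair (k + length s) (lcode (rev (map (fun i => idx (pair i L)) (seq k (length s))) ++ acc)))).
Proof.
  induction s; intros k acc.
  - simpl. rewrite Nat.add_0_r. reflexivity.
  - cbn [length]. rewrite Nat.iter_succ_r. unfold stepAf at 2. autorewrite with pr. cbn [lcode].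
    simpl pred. autorewrite with pr.
    change (S (pair (idx (pair k L)) (lcode acc))) with (lcode (idx (pair k L) :: acc)).
    rewrite IHs. cbn [seq map rev]. rewrite <- app_assoc. simpl. do 3 f_equal. lia.
Qed.

Lemma loopB s : forall acc, Nat.iter (length s) stepBf (pair (lcode s) (lcode acc)) = pair 0 (lcode (rev s ++ acc)).
Proof.
  induction s; intros acc.
  - reflexivity.
  - cbn [length]. rewrite Nat.iter_succ_r. unfold stepBf at 2. autorewrite with pr. cbn [lcode].
    simpl pred. autorewrite with pr.
    change (S (pair a (lcode acc))) with (lcode (a :: acc)).
    rewrite IHs. simpl. rewrite <- app_assoc. reflexivity.
Qed.

Definition fmap xs := map (fun k => idx (pair k (lcode xs))) (seq 0 (length xs)).

Lemma loopA' L xs n : length xs <= n -> Nat.iter n stepAf (pair L (pair (lcode xs) (pair 0 0))) =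
  pair L (pair 0 (pair (length xs) (lcode (rev (map (fun i => idx (pair i L)) (seq 0 (length xs))))))).
Proof.
  intro H. replace n with ((n - length xs) + length xs) by lia.
  rewrite Nat.iter_add. change (pair 0 0) with (pair 0 (lcode [])). rewrite loopA.
  rewrite iter_fix by (unfold stepAf; autorewrite with pr; reflexivity).
  rewrite app_nil_r. reflexivity.
Qed.

Lemma loopB' s n : length s <= n -> Nat.iter n stepBf (pair (lcode s) 0) = pair 0 (lcode (rev s)).
Proof.
  intro H. replace n with ((n - length s) + length s) by lia.
  rewrite Nat.iter_add. change (pair (lcode s) 0) with (pair (lcode s) (lcode [])). rewrite loopB.
  rewrite iter_fix by (unfold stepBf; autorewrite with pr; reflexivity).
  rewrite app_nil_r. reflexivity.
Qed.

Lemma Ff_ok xs : Ff (lcode xs) = lcode (fmap xs).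
Proof.
  unfold Ff. cbv zeta. rewrite loopA' by apply lcode_ge. autorewrite with pr.
  rewrite loopB' by apply lcode_ge. autorewrite with pr. rewrite rev_involutive. reflexivity.
Qed.

End F.

Lemma bound1 (Q : nat -> nat -> Prop) m : (forall a, a < m -> exists b, Q a b) ->
  exists B, forall a, a < m -> exists b, b < B /\ Q a b.
Proof.
  induction m; intro H.
  - exists 0. intros; lia.
  - destruct IHm as [B HB]. { intros; apply H; lia. }
    destruct (H m ltac:(lia)) as [b0 Hb0]. exists (B + S b0). intros a Ha.
    destruct (Nat.eq_dec a m). + subst. exists b0. split; auto; lia.
    + destruct (HB a ltac:(lia)) as [b [? ?]]. exists b. split; auto; lia.
Qed.

Lemma bound2 (P : nat -> nat -> nat -> Prop) r m : (forall i, i < r -> forall a, a < m -> exists b, P i a b) ->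
  exists B, forall i, i < r -> forall a, a < m -> exists b, b < B /\ P i a b.
Proof.
  intro H.
  destruct (bound1 (fun i B => forall a, a < m -> exists b, b < B /\ P i a b) r) as [B HB].
  { intros i Hi. apply bound1. auto. }
  exists B. intros i Hi a Ha. destruct (HB i Hi) as [Bi [HBi H']]. destruct (H' a Ha) as [b [? ?]].
  exists b. split; auto; lia.
Qed.

Section G.
Variables (X : nat -> bool) (t0 : code) (TF : nat -> nat) (Ht : tot X t0 TF)
  (R : nat -> nat -> Prop) (HR : forall i j, R i j <-> forall a, exists b, TF (pair (pair i j) (pair a b)) = 0)
  (Heq : is_equiv R) (xs : list nat).

Definition L := lcode xs.
Definition edge m p q := forall a, a < m -> exists b, TF (pair (pair (nthc p L) (nthc q L)) (pair a b)) = 0.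
Definition Reach m k j := exists r (v : nat -> nat), v 0 = k /\ v r = j /\ forall i, i < r -> edge m (v i) (v (S i)).

Lemma nthc_cons k l i : nthc (S i) (S (pair k l)) = nthc i l.
Proof. unfold nthc. rewrite Nat.iter_succ_r. unfold tl'. simpl pred. autorewrite with pr. reflexivity. Qed.
Lemma nthc_0 k l : nthc 0 (S (pair k l)) = k.
Proof. unfold nthc. simpl. autorewrite with pr. reflexivity. Qed.

Lemma halts_reach k j m : halts X (Pw t0 (pair k L)) (pair j m) <-> Reach m k j.
Proof.
  rewrite (halts_Pw X t0 TF Ht). split.
  - intros [B [r [L' [H1 H2]]]]. exists r, (fun i => nthc i (S (pair k L'))).
    split; [apply nthc_0|]. split; auto.
    intros i Hi a Ha. destruct (H2 i Hi a Ha) as [b [_ Hb]]. eauto.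
  - intros [r [v [H0 [H1 H2]]]].
    set (L' := lcode (map v (seq 1 r))).
    assert (Hv : forall i, i <= r -> nthc i (S (pair k L')) = v i).
    { intros i Hi. change (S (pair k L')) with (lcode (k :: map v (seq 1 r))).
      rewrite nthc_lcode. destruct i. simpl; auto.
      simpl. rewrite nth_indep with (d' := v 0) by (rewrite length_map, length_seq; lia).
      rewrite map_nth, seq_nth by lia. f_equal; lia. }
    destruct (bound2 (fun i a b => TF (pair (pair (nthc (nthc i (S (pair k L'))) L)
        (nthc (nthc (S i) (S (pair k L'))) L)) (pair a b)) = 0) r m) as [B HB].
    { intros i Hi a Ha. rewrite !Hv by lia. apply H2; auto. }
    exists B, r, L'. split; [rewrite Hv; auto|]. exact HB.
Qed.

Lemma edge_mono m m' p q : m <= m' -> edge m' p q -> edge m p q.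
Proof. intros H E a Ha. apply E. lia. Qed.

Lemma R_edge p q : R (nthc p L) (nthc q L) -> forall m, edge m p q.
Proof. intros H m a Ha. rewrite HR in H. apply H. Qed.

Lemma bigM (P : list (nat * nat)) : exists M, forall u v, In (u, v) P ->
  (forall a, a < M -> exists b, TF (pair (pair u v) (pair a b)) = 0) -> R u v.
Proof.
  induction P as [|[u v] P IH].
  - exists 0. intros u v [].
  - destruct IH as [M HM]. destruct (classic (R u v)) as [Huv|Huv].
    + exists M. intros u' v' [E|I] H; [inversion E; subst; auto|]. apply HM; auto.
    + rewrite HR in Huv. apply not_all_ex_not in Huv. destruct Huv as [a0 Ha0].
      exists (M + S a0). intros u' v' [E|I] H.
      * inversion E; subst. exfalso. apply Ha0. apply H. lia.
      * apply HM; auto. intros a Ha. apply H. lia.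
Qed.

Lemma val_in p : In (nthc p L) (0 :: xs).
Proof.
  unfold L. rewrite nthc_lcode. destruct (le_lt_dec (length xs) p).
  - rewrite nth_overflow by auto. left; auto.
  - right. apply nth_In. auto.
Qed.

Lemma key k l : R (nthc k L) (nthc l L) <-> (forall j m, Reach m k j <-> Reach m l j).
Proof.
  destruct Heq as [Hrefl [Hsym Htr]]. split.
  - intros H.
    assert (Hext : forall k l, R (nthc k L) (nthc l L) -> forall j m, Reach m k j -> Reach m l j).
    { intros k' l' H' j m [r [v [H0 [H1 H2]]]].
      exists (S r), (fun i => match i with 0 => l' | S i => v i end). split; auto. split; auto.
      intros i Hi. destruct i. rewrite H0. apply R_edge; auto. apply H2; lia. }
    intros j m. split; apply Hext; auto.
  - intros H. destruct (bigM (list_prod (0 :: xs) (0 :: xs))) as [M HM].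
    assert (Hrl : Reach M l k). { apply H. exists 0, (fun _ => k). split; [auto|split; [auto|intros; lia]]. }
    destruct Hrl as [r [v [H0 [H1 H2]]]].
    assert (forall i, i <= r -> R (nthc l L) (nthc (v i) L)).
    { induction i; intro Hi. rewrite H0; auto.
      apply Htr with (nthc (v i) L). apply IHi; lia.
      apply HM. apply in_prod; apply val_in. apply H2. lia. }
    apply Hsym. rewrite <- H1. auto.
Qed.

End G.

Theorem corollary3p5 (X : nat -> bool) (R : nat -> nat -> Prop) :
  is_equiv R -> Pi02_rel X R -> finitary_reducible R (EW X).
Proof.
  intros Heq [e [Htot HR0]].
  set (TF := fun z => proj1_sig (constructive_indefinite_description _ (Htot z))).
  assert (Ht : tot X (decode e) TF).
  { intro z. unfold TF. destruct (constructive_indefinite_description _ (Htot z)). exact p. }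
  assert (HR : forall i j, R i j <-> forall a, exists b, TF (pair (pair i j) (pair a b)) = 0).
  { intros i j. rewrite HR0. split; intros H a; destruct (H a) as [b Hb]; exists b.
    - symmetry. eapply computes_det; [exact Hb| apply Ht].
    - rewrite <- Hb. apply Ht. }
  set (t0 := decode e).
  exists (fmap t0). split.
  - exists (enc (FPROG' t0)). intro xs. unfold phi. rewrite decode_enc, <- Ff_ok. apply tot_FPROG.
  - intros xs Hlen. unfold fmap. rewrite length_map, length_seq. split; auto.
    intros i j Hij.
    assert (Hn : forall i, i < length xs -> nth i (map (fun k => idx t0 (pair k (lcode xs))) (seq 0 (length xs))) 0
       = idx t0 (pair i (lcode xs))).
    { intros i0 Hi0. rewrite nth_indep with (d' := idx t0 (pair 0 (lcode xs))) by (rewrite length_map, length_seq; lia).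
      change (idx t0 (pair 0 (lcode xs))) with ((fun k => idx t0 (pair k (lcode xs))) 0).
      rewrite map_nth, seq_nth by lia. reflexivity. }
    rewrite !Hn by lia.
    rewrite <- !nthc_lcode.
    rewrite (key TF R HR Heq xs i j).
    unfold EW, W, idx. rewrite !decode_enc.
    split.
    + intros H n. rewrite <- (pair_eta n).
      change (lcode xs) with (L xs). rewrite !(halts_reach X t0 TF Ht). apply H.
    + intros H j' m. rewrite <- !(halts_reach X t0 TF Ht). apply H.
Qed.
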